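(* Consider the SWLME system $\partial_t U+\partial_x F(U)+B(U)\partial_x U=0$ in the conservative variables $U=(h,q,m_1,\dots,m_N)$ with $q=hu_m$, $m_i=h\alpha_i$, on the state space $h>0$, where $$F(U)=\Big(q,\ \frac{q^2}{h}+\frac g2h^2+\sum_{i=1}^N\frac{m_i^2}{(2i+1)h},\ \frac{2qm_1}{h},\dots,\frac{2qm_N}{h}\Big)^T,\quad B(U)=\mathrm{diag}(0,0,-u_m,\dots,-u_m),$$ and $g>0$. Let $A(U)=\frac{\partial F}{\partial U}(U)+B(U)$, with eigenvalues $\lambda_{1,2}=u_m\pm c$, $c=\sqrt{gh+\sum_{i=1}^N\frac{3\alpha_i^2}{2i+1}}$, and $\lambda_{i+2}=u_m$ ($i=1,\dots,N$). Then the characteristic fields associated with $\lambda_1$ and $\lambda_2$ are genuinely nonlinear, i.e. $\nabla_U\lambda_k(U)\cdot r_k(U)\neq 0$ for every $U$ with $h>0$ and every eigenvector $r_k$ of $A(U)$ for $\lambda_k$ ($k=1,2$), and the eigenvalue $u_m$ is linearly degenerate, i.e. $\nabla_U u_m\cdot r=0$ for every eigenvector $r$ of $A(U)$ associated with the eigenvalue $u_m$.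
   Context: SWLME = Shallow Water Linearized Moment Equations: $h$ water height, $u_m$ mean horizontal velocity, $\alpha_i$ coefficients of the vertical velocity profile expansion in Legendre-type basis functions, $g$ gravitational constant. Gradients are taken with respect to the conservative variables $(h,q,m_1,\dots,m_N)$, with $u_m=q/h$, $\alpha_i=m_i/h$. *)

(* Defs.v *)
From HB Require Import structures.
From mathcomp Require Import all_boot all_order all_algebra.
From mathcomp Require Import all_classical all_reals all_analysis.
Set Implicit Arguments. Unset Strict Implicit. Unset Printing Implicit Defensive.
Import Order.TTheory GRing.Theory Num.Theory.
Import numFieldNormedType.Exports.
Local Open Scope ring_scope.

Section SWLME.
Variables (R : realType) (N : nat) (g : R).

(* State vector U = (h, q, m_1, ..., m_N) as a column vector of size N+2. *)
Definition state := 'cV[R]_(N.+2).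

Definition hI : 'I_(N.+2) := ord0.
Definition qI : 'I_(N.+2) := lift ord0 ord0.
(* index of m_{i+1} for i : 'I_N (Rocq ordinals start at 0) *)
Definition mI (i : 'I_N) : 'I_(N.+2) := lift ord0 (lift ord0 i).

Definition hh (U : state) : R := U hI ord0.
Definition qq (U : state) : R := U qI ord0.
Definition mm (U : state) (i : 'I_N) : R := U (mI i) ord0.
Definition um (U : state) : R := qq U / hh U.
Definition alpha (U : state) (i : 'I_N) : R := mm U i / hh U.

(* flux F(U); component j >= 2 is 2 q m_{j-1} / h, with m_{j-1} = U j 0 *)
Definition flux (U : state) : state :=
  \col_j (if j == hI then qq U
          else if j == qI then
            qq U ^+ 2 / hh U + g / 2 * hh U ^+ 2
            + \sum_(i < N) mm U i ^+ 2 / ((2 * i.+1 + 1)%:R * hh U)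
          else 2 * qq U * U j ord0 / hh U).

Definition Bmat (U : state) : 'M[R]_(N.+2) :=
  \matrix_(i, j) (if (i == j) && (2 <= i)%N then - um U else 0).

Definition ebasis (k : 'I_(N.+2)) : state := delta_mx k ord0.

Definition jacF (U : state) : 'M[R]_(N.+2) :=
  \matrix_(i, j) derive (fun V : state => flux V i ord0) U (ebasis j).

Definition Amat (U : state) : 'M[R]_(N.+2) := jacF U + Bmat U.

Definition grad_dot (f : state -> R) (U r : state) : R :=
  \sum_(k < N.+2) derive f U (ebasis k) * r k ord0.

Definition is_eigenvector (M : 'M[R]_(N.+2)) (lam : R) (r : state) : Prop :=
  r != 0 /\ M *m r = lam *: r.

Definition sound_speed (U : state) : R :=
  Num.sqrt (g * hh U + \sum_(i < N) 3 * alpha U i ^+ 2 / (2 * i.+1 + 1)%:R).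

Definition lambda1 (U : state) : R := um U - sound_speed U.
Definition lambda2 (U : state) : R := um U + sound_speed U.

End SWLME.

(* Main.v *)
Require Import Defs.
From HB Require Import structures.
From mathcomp Require Import all_boot all_order all_algebra.
From mathcomp Require Import all_classical all_reals all_analysis.
From mathcomp Require Import ring lra.
Import Order.TTheory GRing.Theory Num.Theory.
Import numFieldNormedType.Exports.
Local Open Scope ring_scope.

Section G.
Variables (R : realType) (V : normedModType R).
Implicit Types (f g : V -> R).

Lemma dM f g x v df dg : is_derive x v f df -> is_derive x v g dg ->
  is_derive x v (fun y => f y * g y) (f x * dg + g x * df).
Proof. move=> Hf Hg; exact: (is_deriveM Hf Hg). Qed.

Lemma dD f g x v df dg : is_derive x v f df -> is_derive x v g dg ->
  is_derive x v (fun y => f y + g y) (df + dg).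
Proof. move=> Hf Hg; exact: (is_deriveD Hf Hg). Qed.

Lemma dB f g x v df dg : is_derive x v f df -> is_derive x v g dg ->
  is_derive x v (fun y => f y - g y) (df - dg).
Proof. move=> Hf Hg; exact: (is_deriveB Hf Hg). Qed.

Lemma dcst (a : R) x v : is_derive x v (fun _ : V => a) 0.
Proof. exact: is_derive_cst. Qed.

Lemma dV f x v df : f x != 0 -> is_derive x v f df ->
  is_derive x v (fun y => (f y)^-1) (- df / (f x) ^+ 2).
Proof.
move=> fx [d1 d2]; apply: DeriveDef; first exact: derivableV.
rewrite deriveV // d2 /=; change (- f x ^- 2 * df = - df / f x ^+ 2); by rewrite mulNr mulrC mulNr.
Qed.
Lemma dX2 f x v df : is_derive x v f df ->
  is_derive x v (fun y => f y ^+ 2) (2 * f x * df).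
Proof.
move=> H; have -> : (fun y => f y ^+ 2) = (fun y => f y * f y).
  by apply/funext => y; rewrite expr2.
apply: is_derive_eq; change (f x * df + f x * df = 2 * f x * df); ring.
Qed.

Lemma dsum n (h : 'I_n -> V -> R) x v (dh : 'I_n -> R) :
  (forall i, is_derive x v (h i) (dh i)) ->
  is_derive x v (fun y => \sum_(i < n) h i y) (\sum_(i < n) dh i).
Proof. move=> H; rewrite -fct_sumE; exact: is_derive_sum. Qed.

Lemma derive_line f x v : derive f x v = derive (fun h : R => f (h *: v + x)) 0 1.
Proof.
rewrite /derive; set g1 := fun h => h^-1 *: _; set g2 := fun h => h^-1 *: _.
suff -> : g1 = g2 by [].
by rewrite funeqE /g1 /g2 => h /=; rewrite addr0 scale0r add0r [_%:A]mulr1.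
Qed.

Lemma is_derive_line f x v df :
  is_derive (0:R) 1 (fun h : R => f (h *: v + x)) df -> is_derive x v f df.
Proof.
case=> d1 d2; apply: DeriveDef; first exact/derivable1P.
by rewrite derive_line.
Qed.

Lemma line_is_derive f x v df :
  is_derive x v f df -> is_derive (0:R) 1 (fun h : R => f (h *: v + x)) df.
Proof.
case=> d1 d2; apply: DeriveDef; first by move/derivable1P: d1.
by rewrite -derive_line.
Qed.

Lemma dsqrt f x v df : 0 < f x -> is_derive x v f df ->
  is_derive x v (fun y => Num.sqrt (f y)) (df / (2 * Num.sqrt (f x))).
Proof.
move=> fx0 H; apply: is_derive_line.
have H1 := @line_is_derive f x v df H.
have e : f (0 *: v + x) = f x by rewrite scale0r add0r.
have H2 : is_derive (f (0 *: v + x)) 1 Num.sqrt (2 * Num.sqrt (f x))^-1.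
  rewrite e; exact: is_derive1_sqrt.
have := is_derive1_comp H2 H1.
by rewrite mulrC.
Qed.
End G.

Lemma dcoord (R : realType) m n (i : 'I_m) (j : 'I_n) (x v : 'M[R]_(m, n)) :
  is_derive x v (fun y : 'M[R]_(m, n) => y i j) (v i j).
Proof.
apply: is_derive_line.
have -> : (fun h : R => (h *: v + x) i j) = (fun h => h * v i j + x i j).
  by apply/funext => h; rewrite !mxE.
apply: is_derive_eq.
by rewrite scaler0 add0r addr0 [_%:A]mulr1.
Qed.

Arguments dM {R V f g x v df dg}.
Arguments dD {R V f g x v df dg}.
Arguments dB {R V f g x v df dg}.
Arguments dV {R V f x v df}.
Arguments dX2 {R V f x v df}.
Arguments dsqrt {R V f x v df}.
Arguments dsum {R V n h x v dh}.
Arguments dcst {R V} a x v.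
Arguments dcoord {R m n} i j x v.

Section Main.
Variables (R : realType) (N : nat) (g : R).
Local Notation S := (state R N).
Local Notation hI := (hI N).
Local Notation qI := (qI N).

Lemma ebE (k p : 'I_N.+2) : ebasis R k p ord0 = (p == k)%:R.
Proof. by rewrite /ebasis mxE eqxx andbT. Qed.

Lemma sum_e (p : 'I_N.+2) (r : S) :
  \sum_k ebasis R k p ord0 * r k ord0 = r p ord0.
Proof.
rewrite (bigD1 p) //= ebE eqxx mul1r big1 ?addr0 // => k kp.
by rewrite ebE eq_sym (negbTE kp) mul0r.
Qed.

Lemma L1 (f : S -> R) U a b c p (r : S) :
  (forall v, is_derive U v f (a * v hI ord0 + b * v qI ord0 + c * v p ord0)) ->
  \sum_j derive f U (ebasis R j) * r j ord0
    = a * r hI ord0 + b * r qI ord0 + c * r p ord0.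
Proof.
move=> H.
rewrite (eq_bigr (fun j => a * (ebasis R j hI ord0 * r j ord0)
   + b * (ebasis R j qI ord0 * r j ord0) + c * (ebasis R j p ord0 * r j ord0))); last first.
  by move=> j _; have [_ ->] := H (ebasis R j); ring.
by rewrite !big_split /= -!mulr_sumr !sum_e.
Qed.

Lemma L2 (f : S -> R) U a b (c : 'I_N -> R) (r : S) :
  (forall v, is_derive U v f (a * v hI ord0 + b * v qI ord0
     + \sum_i c i * v (mI i) ord0)) ->
  grad_dot f U r = a * r hI ord0 + b * r qI ord0 + \sum_i c i * r (mI i) ord0.
Proof.
move=> H; rewrite /grad_dot.
rewrite (eq_bigr (fun j => a * (ebasis R j hI ord0 * r j ord0)
   + b * (ebasis R j qI ord0 * r j ord0)
   + \sum_i c i * (ebasis R j (mI i) ord0 * r j ord0))); last first.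
  move=> j _; have [_ ->] := H (ebasis R j); rewrite !mulrDl mulr_suml.
  congr (_ + _ + _); [ring | ring | apply: eq_bigr => i _; ring].
rewrite !big_split /= -!mulr_sumr !sum_e exchange_big /=; congr (_ + _).
by apply: eq_bigr => i _; rewrite -mulr_sumr sum_e.
Qed.

Lemma ord_cases (k : 'I_N.+2) : k = hI \/ k = qI \/ exists i, k = mI i.
Proof.
case: k => [[|[|k]] Hk]; [left|right;left|right;right]; try by apply: val_inj.
have Hk' : (k < N)%N by [].
by exists (Ordinal Hk'); apply: val_inj.
Qed.

Lemma Dum (U : S) : hh U != 0 -> forall v,
  is_derive U v (@um R N) ((- qq U / hh U ^+ 2) * v hI ord0 + (hh U)^-1 * v qI ord0
     + \sum_(i < N) 0 * v (mI i) ord0).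
Proof.
move=> h0 v; rewrite /um; apply: is_derive_eq.
  exact: (dM (dcoord qI ord0 U v) (dV h0 (dcoord hI ord0 U v))).
rewrite big1 ?addr0; last by move=> i _; rewrite mul0r.
rewrite /hh /qq; field.
by [].
Qed.

Lemma flux_m (V : S) i : flux g V (mI i) ord0 = 2 * qq V * V (mI i) ord0 / hh V.
Proof. by rewrite /flux mxE. Qed.

Lemma flux_h (V : S) : flux g V hI ord0 = qq V.
Proof. by rewrite /flux mxE. Qed.

Lemma Dflux_m (U : S) i : hh U != 0 -> forall v,
  is_derive U v (fun V => flux g V (mI i) ord0)
   ((- 2 * qq U * mm U i / hh U ^+ 2) * v hI ord0 + (2 * mm U i / hh U) * v qI ord0
     + (2 * qq U / hh U) * v (mI i) ord0).
Proof.
move=> h0 v.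
have -> : (fun V => flux g V (mI i) ord0) = (fun V => 2 * qq V * V (mI i) ord0 / hh V).
  by apply/funext => V; exact: flux_m.
apply: is_derive_eq.
  exact: (dM (dM (dM (dcst 2 U v) (dcoord qI ord0 U v)) (dcoord (mI i) ord0 U v))
            (dV h0 (dcoord hI ord0 U v))).
rewrite /hh /qq /mm; field.
by [].
Qed.

Lemma Dflux_h (U : S) v :
  is_derive U v (fun V => flux g V hI ord0) (0 * v hI ord0 + 1 * v qI ord0 + 0 * v hI ord0).
Proof.
have -> : (fun V => flux g V hI ord0) = (fun V => V qI ord0).
  by apply/funext => V; exact: flux_h.
apply: is_derive_eq; first exact: (dcoord qI ord0 U v).
ring.
Qed.

Lemma Spos (hg : 0 < g) (U : S) : 0 < hh U ->
  0 < g * hh U + \sum_(i < N) 3 * alpha U i ^+ 2 / (2 * i.+1 + 1)%:R.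
Proof.
move=> hp; have h1 : 0 < g * hh U by rewrite mulr_gt0.
have h2 : 0 <= \sum_(i < N) 3 * alpha U i ^+ 2 / (2 * i.+1 + 1)%:R.
  apply: sumr_ge0 => i _; apply: divr_ge0; last exact: ler0n.
  by rewrite mulr_ge0 ?sqr_ge0.
lra.
Qed.

Lemma cpos (hg : 0 < g) (U : S) : 0 < hh U -> 0 < sound_speed g U.
Proof. by move=> hp; rewrite /sound_speed sqrtr_gt0 Spos. Qed.

Lemma kne0 (i : 'I_N) : (2 * i.+1 + 1)%:R != 0 :> R.
Proof. by rewrite pnatr_eq0 addn1. Qed.

Lemma Dc (hg : 0 < g) (U : S) : 0 < hh U -> forall v,
  is_derive U v (sound_speed g)
   ((g - \sum_(i < N) 6 * alpha U i ^+ 2 / (hh U * (2 * i.+1 + 1)%:R))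
        / (2 * sound_speed g U) * v hI ord0 + 0 * v qI ord0
     + \sum_(i < N) (6 * alpha U i / (hh U * (2 * i.+1 + 1)%:R) / (2 * sound_speed g U))
         * v (mI i) ord0).
Proof.
move=> hp v; have h0 : hh U != 0 by rewrite gt_eqF.
have Hal i := dM (dcoord (mI i) ord0 U v) (dV h0 (dcoord hI ord0 U v)).
have HT i := dM (dM (dcst 3 U v) (dX2 (Hal i))) (dcst ((2 * i.+1 + 1)%:R)^-1 U v).
have HS := dD (dM (dcst g U v) (dcoord hI ord0 U v)) (dsum HT).
apply: is_derive_eq.
  apply: (dsqrt _ HS).
  exact: Spos.
rewrite /= -[Num.sqrt _]/(sound_speed g U).
have c0 : sound_speed g U != 0 by rewrite gt_eqF // cpos.
move: c0; set c := sound_speed g U => c0.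
rewrite /alpha /mm /hh.
have hh0 : U hI ord0 != 0 by [].
rewrite (eq_bigr (fun i => - (6 * (U (mI i) ord0 / U hI ord0) ^+ 2
    / (U hI ord0 * (2 * i.+1 + 1)%:R)) * v hI ord0
   + 6 * (U (mI i) ord0 / U hI ord0) / (U hI ord0 * (2 * i.+1 + 1)%:R)
     * v (mI i) ord0)); last first.
  move=> i _; have := kne0 i; move: (_%:R) => k k0; field.
  by rewrite k0 hh0.
rewrite big_split /= -mulr_suml sumrN.
rewrite [X in _ = _ + X](eq_bigr (fun i => 6 * (U (mI i) ord0 / U hI ord0)
   / (U hI ord0 * (2 * i.+1 + 1)%:R) * v (mI i) ord0 / (2 * c))); last first.
  by move=> i _; rewrite mulrAC.
rewrite -mulr_suml.
field.
by rewrite c0.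
Qed.

Lemma rowA (U r : S) (k : 'I_N.+2) :
  (Amat g U *m r) k ord0 =
  \sum_j derive (fun V => flux g V k ord0) U (ebasis R j) * r j ord0
  + \sum_j Bmat U k j * r j ord0.
Proof.
rewrite mxE -big_split /=; apply: eq_bigr => j _.
by rewrite [Amat g U k j]mxE [jacF g U k j]mxE mulrDl.
Qed.

Lemma B_h (U r : S) : \sum_j Bmat U hI j * r j ord0 = 0.
Proof. by apply: big1 => j _; rewrite mxE andbF mul0r. Qed.

Lemma B_m (U r : S) i : \sum_j Bmat U (mI i) j * r j ord0 = - um U * r (mI i) ord0.
Proof.
rewrite (bigD1 (mI i)) //= mxE eqxx /= big1 ?addr0 // => j ji.
by rewrite mxE eq_sym (negbTE ji) mul0r.
Qed.

Lemma eig_h (U r : S) lam : is_eigenvector (Amat g U) lam r ->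
  r qI ord0 = lam * r hI ord0.
Proof.
case=> _ /(congr1 (fun M : S => M hI ord0)).
rewrite rowA (L1 _ _ _ _ _ _ _ (Dflux_h U)) B_h mxE => <-; ring.
Qed.

Lemma eig_struct (U r : S) lam : 0 < hh U -> lam - um U != 0 ->
  is_eigenvector (Amat g U) lam r ->
  [/\ r qI ord0 = lam * r hI ord0,
      (forall i, r (mI i) ord0 = 2 * alpha U i * r hI ord0) & r hI ord0 != 0].
Proof.
move=> hp lu Er; have h0 : hh U != 0 by rewrite gt_eqF.
have Eh := eig_h _ _ _ Er.
have Em : forall i, r (mI i) ord0 = 2 * alpha U i * r hI ord0.
  move=> i; case: Er => _ /(congr1 (fun M : S => M (mI i) ord0)).
  rewrite rowA (L1 _ _ _ _ _ _ _ (Dflux_m _ i h0)) B_m mxE => E.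
  have X : (lam - um U) * (r (mI i) ord0 - 2 * alpha U i * r hI ord0) =
     (lam * r (mI i) ord0 - ((- 2 * qq U * mm U i / hh U ^+ 2) * r hI ord0
       + (2 * mm U i / hh U) * r qI ord0 + (2 * qq U / hh U) * r (mI i) ord0
       + - um U * r (mI i) ord0))
     + 2 * alpha U i * (r qI ord0 - lam * r hI ord0).
    rewrite /um /alpha; field; exact: h0.
  move: X; rewrite E Eh !subrr mulr0 addr0 => /eqP.
  by rewrite mulf_eq0 (negbTE lu) /= subr_eq0 => /eqP.
split=> //; apply/negP => /eqP rh0.
case: Er => /negP H _; apply: H; apply/eqP/matrixP => k j.
rewrite (ord1 j) !mxE.
have [->|[->|[i ->]]] := ord_cases k.
- exact: rh0.
- by rewrite Eh rh0 mulr0.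
- by rewrite Em rh0 mulr0.
Qed.

Lemma sumBl (c d w : 'I_N -> R) :
  \sum_i (c i - d i) * w i = \sum_i c i * w i - \sum_i d i * w i.
Proof. by rewrite -sumrB; apply: eq_bigr => i _; rewrite mulrBl. Qed.

Lemma sumDl (c d w : 'I_N -> R) :
  \sum_i (c i + d i) * w i = \sum_i c i * w i + \sum_i d i * w i.
Proof. by rewrite -big_split; apply: eq_bigr => i _; rewrite mulrDl. Qed.

Lemma Dlam1 (hg : 0 < g) (U : S) : 0 < hh U -> forall v,
  is_derive U v (lambda1 g)
   ((- qq U / hh U ^+ 2 - (g - \sum_(i < N) 6 * alpha U i ^+ 2 / (hh U * (2 * i.+1 + 1)%:R))
        / (2 * sound_speed g U)) * v hI ord0 + ((hh U)^-1 - 0) * v qI ord0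
     + \sum_(i < N) (0 - 6 * alpha U i / (hh U * (2 * i.+1 + 1)%:R) / (2 * sound_speed g U))
         * v (mI i) ord0).
Proof.
move=> hp v; have h0 : hh U != 0 by rewrite gt_eqF.
apply: is_derive_eq; first exact: (dB (Dum U h0 v) (Dc hg U hp v)).
rewrite sumBl /=; ring.
Qed.

Lemma Dlam2 (hg : 0 < g) (U : S) : 0 < hh U -> forall v,
  is_derive U v (lambda2 g)
   ((- qq U / hh U ^+ 2 + (g - \sum_(i < N) 6 * alpha U i ^+ 2 / (hh U * (2 * i.+1 + 1)%:R))
        / (2 * sound_speed g U)) * v hI ord0 + ((hh U)^-1 + 0) * v qI ord0
     + \sum_(i < N) (0 + 6 * alpha U i / (hh U * (2 * i.+1 + 1)%:R) / (2 * sound_speed g U))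
         * v (mI i) ord0).
Proof.
move=> hp v; have h0 : hh U != 0 by rewrite gt_eqF.
apply: is_derive_eq; first exact: (dD (Dum U h0 v) (Dc hg U hp v)).
rewrite sumDl /=; ring.
Qed.

Lemma GN (hg : 0 < g) (U : S) (hp : 0 < hh U) (r : S) (s : R) (lam : S -> R) :
  (s = 1 \/ s = -1) ->
  lam U = um U + s * sound_speed g U ->
  (forall v, is_derive U v lam
   ((- qq U / hh U ^+ 2 + s * ((g - \sum_(i < N) 6 * alpha U i ^+ 2 / (hh U * (2 * i.+1 + 1)%:R))
        / (2 * sound_speed g U))) * v hI ord0 + ((hh U)^-1 + 0) * v qI ord0
     + \sum_(i < N) (0 + s * (6 * alpha U i / (hh U * (2 * i.+1 + 1)%:R) / (2 * sound_speed g U)))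
         * v (mI i) ord0)) ->
  is_eigenvector (Amat g U) (lam U) r -> grad_dot lam U r != 0.
Proof.
move=> s1 lamE Dl Er.
have h0 : hh U != 0 by rewrite gt_eqF.
have cp := cpos hg U hp.
have s0 : s != 0 by case: s1 => ->; rewrite ?oppr_eq0 oner_neq0.
have lu : lam U - um U != 0.
  by rewrite lamE addrAC subrr add0r mulf_neq0 // gt_eqF.
have [Eh Em rh] := @eig_struct U r _ hp lu Er.
rewrite (L2 _ _ _ _ _ _ Dl) Eh.
have Esum : forall cc : 'I_N -> R, \sum_i cc i * r (mI i) ord0
    = \sum_i cc i * (2 * alpha U i * r hI ord0).
  by move=> cc; apply: eq_bigr => i _; rewrite Em.
rewrite Esum.
set c := sound_speed g U.
set T := \sum_(i < N) 6 * alpha U i ^+ 2 / (hh U * (2 * i.+1 + 1)%:R).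
have c0 : c != 0 by rewrite gt_eqF.
have -> : \sum_(i < N) (0 + s * (6 * alpha U i / (hh U * (2 * i.+1 + 1)%:R) / (2 * c)))
     * (2 * alpha U i * r hI ord0) = s * (T * (r hI ord0 / c)).
  rewrite /T mulr_suml mulr_sumr; apply: eq_bigr => i _.
  have := kne0 i; move: (_%:R) => k k0; field.
  by rewrite k0 h0 c0.
have Tge : 0 <= T.
  apply: sumr_ge0 => i _; apply: divr_ge0; first by rewrite mulr_ge0 ?sqr_ge0.
  by rewrite mulr_ge0 ?ler0n // ltW.
rewrite lamE -/c /um.
have -> : (- qq U / hh U ^+ 2 + s * ((g - T) / (2 * c))) * r hI ord0 +
   ((hh U)^-1 + 0) * ((qq U / hh U + s * c) * r hI ord0) + s * (T * (r hI ord0 / c))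
   = s * (r hI ord0 * ((2 * c ^+ 2 + g * hh U + T * hh U) / (2 * c * hh U))).
  field; by rewrite c0 h0.
rewrite mulf_neq0 // mulf_neq0 // gt_eqF // divr_gt0 //; last first.
  by rewrite !mulr_gt0.
have := mulr_gt0 hg hp; have := mulr_ge0 Tge (ltW hp); have := sqr_ge0 c.
lra.
Qed.

Lemma LD (U : S) (hp : 0 < hh U) (r : S) :
  is_eigenvector (Amat g U) (um U) r -> grad_dot (@um R N) U r = 0.
Proof.
move=> Er; have h0 : hh U != 0 by rewrite gt_eqF.
have Eh := eig_h _ _ _ Er.
rewrite (L2 _ _ _ _ _ _ (Dum U h0)) Eh big1; last by move=> i _; rewrite mul0r.
rewrite /um; field; exact: h0.
Qed.

End Main.

Theorem mainTheorem2 (R : realType) (N : nat) (g : R) (hg : 0 < g) :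
  (forall (U : state R N), 0 < hh U ->
     (forall r, is_eigenvector (Amat g U) (lambda1 g U) r ->
                grad_dot (lambda1 g) U r != 0) /\
     (forall r, is_eigenvector (Amat g U) (lambda2 g U) r ->
                grad_dot (lambda2 g) U r != 0)) /\
  (forall (U : state R N), 0 < hh U ->
     forall r, is_eigenvector (Amat g U) (um U) r ->
               grad_dot (@um R N) U r = 0).
Proof.
split; last exact: LD.
move=> U hp; split=> r Er.
- apply: (@GN R N g hg U hp r (-1) (lambda1 g) _ _ _ Er); first by right.
    by rewrite /lambda1 mulN1r.
  move=> v; apply: is_derive_eq; first exact: (@Dlam1 R N g hg U hp v).
  congr (_ * _ + _ * _ + _); try ring; apply: eq_bigr => i _; ring.
- apply: (@GN R N g hg U hp r 1 (lambda2 g) _ _ _ Er); first by left.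
    by rewrite /lambda2 mul1r.
  move=> v; apply: is_derive_eq; first exact: (@Dlam2 R N g hg U hp v).
  congr (_ * _ + _ * _ + _); try ring; apply: eq_bigr => i _; ring.
Qed.
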